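(* Consider the algorithm AASGDA described in the context and assume (A3)–(A5). Then for every $t\ge0$, with $\mathbb{E}_t[\cdot]=\mathbb{E}[\cdot\mid(x^t,y^t,\psi^t)]$ and $\mathbb{E}_{\hat t}[\cdot]=\mathbb{E}[\cdot\mid(x^{t+1},y^t,\psi^t)]$: (a) $\|\mathbb{E}_t[G_x^t(x^t,y^t,z_x^t)]-\nabla_x\mathcal{L}(x^t,y^t)\|\le L_1\|\nabla_x\psi^t(x^t,y^t)-\nabla_x\psi(x^t,y^t)\|_F$; (b) $\mathbb{E}_t\|G_x^t(x^t,y^t,z_x^t)\|^2\le\|\mathbb{E}_t[G_x^t(x^t,y^t,z_x^t)]\|^2+(1+\|\nabla_x\psi^t(x^t,y^t)\|_F^2)\sigma^2$; (c) $\|\mathbb{E}_{\hat t}[G_y^t(x^{t+1},y^t,z_y^t)]-\nabla_y\mathcal{L}(x^{t+1},y^t)\|\le L_1\|\nabla_y\psi^t(x^{t+1},y^t)-\nabla_y\psi(x^{t+1},y^t)\|_F$; (d) $\mathbb{E}_{\hat t}\|G_y^t(x^{t+1},y^t,z_y^t)\|^2\le\|\mathbb{E}_{\hat t}[G_y^t(x^{t+1},y^t,z_y^t)]\|^2+(1+\|\nabla_y\psi^t(x^{t+1},y^t)\|_F^2)\sigma^2$.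
   Context: Let $n,m,d$ be positive integers. Let $l:\mathbb{R}^n\times\mathbb{R}^m\times\mathbb{R}^d\to\mathbb{R}$ be continuously differentiable with partial gradients $\nabla_x l,\nabla_y l,\nabla_z l$; write $\nabla_{x,z}l=(\nabla_x l,\nabla_z l)$, $\nabla_{y,z}l=(\nabla_y l,\nabla_z l)$. Let $\mathbb{P}$ be a probability measure on $\mathbb{R}^d$ and $\psi:\mathbb{R}^n\times\mathbb{R}^m\to\mathbb{R}^d$ differentiable with partial Jacobians $\nabla_x\psi,\nabla_y\psi$; $\|\cdot\|_F$ is the Frobenius norm. $\mathcal{D}(x,y)$ is the law of $\psi(x,y)+\xi$, $\xi\sim\mathbb{P}$, and $\mathcal{L}(x,y)=\mathbb{E}_{z\sim\mathcal{D}(x,y)}[l(x,y,z)]$ (assumed differentiable with $\nabla_x\mathcal{L}(x,y)=\mathbb{E}_{z\sim\mathcal{D}(x,y)}[\nabla_x l+\nabla_x\psi(x,y)^\top\nabla_z l]$ and analogously for $y$). Assumptions (constants $L_0,\ell_0,L_1,\sigma>0$): (A3) For all $(x,y)$: $\mathbb{E}_{z\sim\mathcal{D}(x,y)}\|\nabla_x l(x,y,z)\|\le L_1$, $\mathbb{E}_{z\sim\mathcal{D}(x,y)}\|\nabla_z l(x,y,z)\|\le L_1$. (A4) For all $(x,y)$: $\mathbb{E}_{z\sim\mathcal{D}(x,y)}\|\nabla_{x,z}l-\mathbb{E}\nabla_{x,z}l\|^2\le\sigma^2$ and $\mathbb{E}_{z\sim\mathcal{D}(x,y)}\|\nabla_{y,z}l-\mathbb{E}\nabla_{y,z}l\|^2\le\sigma^2$.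 (A5) $\psi$ is $L_0$-Lipschitz and $\ell_0$-smooth. AASGDA (stepsizes $\eta_x,\eta_y>0$): start from $x^0\in\mathbb{R}^n$, $y^0\in\mathbb{R}^m$, initial estimate $\psi^0$. At iteration $t$, given $(x^t,y^t)$ and the current estimate $\psi^t$ (a differentiable map, possibly random, determined by the history), with $G_x^t(x,y,z)=\nabla_x l(x,y,z)+\nabla_x\psi^t(x,y)^\top\nabla_z l(x,y,z)$ and $G_y^t(x,y,z)=\nabla_y l(x,y,z)+\nabla_y\psi^t(x,y)^\top\nabla_z l(x,y,z)$: draw $z_x^t$ with law $\mathcal{D}(x^t,y^t)$ conditionally on the past, set $x^{t+1}=x^t-\eta_x G_x^t(x^t,y^t,z_x^t)$; draw $z_y^t$ with law $\mathcal{D}(x^{t+1},y^t)$ conditionally on the past (including $x^{t+1}$), set $y^{t+1}=y^t+\eta_y G_y^t(x^{t+1},y^t,z_y^t)$; then form $\psi^{t+1}$ by an arbitrary estimation rule. *)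

(* Defs.v *)
From HB Require Import structures.
From mathcomp Require Import all_boot all_order all_algebra.
From mathcomp Require Import all_classical all_reals all_analysis.
Set Implicit Arguments. Unset Strict Implicit. Unset Printing Implicit Defensive.
Import Order.TTheory GRing.Theory Num.Theory numFieldNormedType.Exports.
Local Open Scope classical_set_scope.
Local Open Scope ring_scope.

(* Frobenius norm of a matrix; for a column vector it is the Euclidean norm. *)
Definition frob (R : realType) (p q : nat) (A : 'M[R]_(p, q)) : R :=
  Num.sqrt (\sum_(i < p) \sum_(j < q) A i j ^+ 2).

Definition Evec (R : realType) (dT : measure_display) (T : measurableType dT)
  (P : probability T R) (p q : nat) (f : T -> 'M[R]_(p, q)) : 'M[R]_(p, q) :=
  \matrix_(i, j) Rintegral P setT (fun w => f w i j).

Definition Ebar (R : realType) (dT : measure_display) (T : measurableType dT)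
  (P : probability T R) (f : T -> R) : \bar R :=
  (\int[P]_w (f w)%:E)%E.

(* z ~ D(x,y) is realized as z = psi(x,y) + xi(w), w ~ P, xi having law the
   noise distribution. *)
Definition zof (R : realType) (T : Type) (n m d : nat)
  (psi : 'cV[R]_n -> 'cV[R]_m -> 'cV[R]_d) (xi : T -> 'cV[R]_d)
  (x : 'cV[R]_n) (y : 'cV[R]_m) (w : T) : 'cV[R]_d := psi x y + xi w.

Definition partials1 (R : realType) (n m d : nat)
  (f : 'cV[R]_n -> 'cV[R]_m -> 'cV[R]_d) (J : 'cV[R]_n -> 'cV[R]_m -> 'M[R]_(d, n)) :=
  forall x y (j : 'I_n), is_derive x (delta_mx j 0 : 'cV[R]_n) (fun x' => f x' y) (col j (J x y)).

Definition partials2 (R : realType) (n m d : nat)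
  (f : 'cV[R]_n -> 'cV[R]_m -> 'cV[R]_d) (J : 'cV[R]_n -> 'cV[R]_m -> 'M[R]_(d, m)) :=
  forall x y (j : 'I_m), is_derive y (delta_mx j 0 : 'cV[R]_m) (fun y' => f x y') (col j (J x y)).

Definition diff_with_jac (R : realType) (n m d : nat)
  (f : 'cV[R]_n -> 'cV[R]_m -> 'cV[R]_d)
  (Jx : 'cV[R]_n -> 'cV[R]_m -> 'M[R]_(d, n)) (Jy : 'cV[R]_n -> 'cV[R]_m -> 'M[R]_(d, m)) :=
  [/\ forall p : 'cV[R]_n * 'cV[R]_m, differentiable (fun q : 'cV[R]_n * 'cV[R]_m => f q.1 q.2) p,
      partials1 f Jx & partials2 f Jy].

Definition C1_with_grads (R : realType) (n m d : nat)
  (l : 'cV[R]_n -> 'cV[R]_m -> 'cV[R]_d -> R)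
  (gx : 'cV[R]_n -> 'cV[R]_m -> 'cV[R]_d -> 'cV[R]_n)
  (gy : 'cV[R]_n -> 'cV[R]_m -> 'cV[R]_d -> 'cV[R]_m)
  (gz : 'cV[R]_n -> 'cV[R]_m -> 'cV[R]_d -> 'cV[R]_d) :=
  [/\ continuous (fun p : ('cV[R]_n * 'cV[R]_m) * 'cV[R]_d => gx p.1.1 p.1.2 p.2),
      continuous (fun p : ('cV[R]_n * 'cV[R]_m) * 'cV[R]_d => gy p.1.1 p.1.2 p.2),
      continuous (fun p : ('cV[R]_n * 'cV[R]_m) * 'cV[R]_d => gz p.1.1 p.1.2 p.2) &
     [/\ (forall x y z (i : 'I_n), is_derive x (delta_mx i 0 : 'cV[R]_n) (fun x' => l x' y z) (gx x y z i 0)),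
      (forall x y z (i : 'I_m), is_derive y (delta_mx i 0 : 'cV[R]_m) (fun y' => l x y' z) (gy x y z i 0)) &
      (forall x y z (i : 'I_d), is_derive z (delta_mx i 0 : 'cV[R]_d) (fun z' => l x y z') (gz x y z i 0))]].

Definition Gx (R : realType) (n m d : nat)
  (gx : 'cV[R]_n -> 'cV[R]_m -> 'cV[R]_d -> 'cV[R]_n)
  (gz : 'cV[R]_n -> 'cV[R]_m -> 'cV[R]_d -> 'cV[R]_d)
  (Jtx : 'cV[R]_n -> 'cV[R]_m -> 'M[R]_(d, n)) x y z : 'cV[R]_n :=
  gx x y z + (Jtx x y)^T *m gz x y z.

Definition Gy (R : realType) (n m d : nat)
  (gy : 'cV[R]_n -> 'cV[R]_m -> 'cV[R]_d -> 'cV[R]_m)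
  (gz : 'cV[R]_n -> 'cV[R]_m -> 'cV[R]_d -> 'cV[R]_d)
  (Jty : 'cV[R]_n -> 'cV[R]_m -> 'M[R]_(d, m)) x y z : 'cV[R]_m :=
  gy x y z + (Jty x y)^T *m gz x y z.

(* Main.v *)
Require Import Defs.
From HB Require Import structures.
From mathcomp Require Import all_boot all_order all_algebra.
From mathcomp Require Import all_classical all_reals all_analysis.
From mathcomp Require Import ring lra measurable_realfun measurable_fun_approximation.
Set Implicit Arguments. Unset Strict Implicit. Unset Printing Implicit Defensive.
Import Order.TTheory GRing.Theory Num.Theory numFieldNormedType.Exports.
Local Open Scope classical_set_scope.
Local Open Scope ring_scope.


Section Alg.
Variable R : realType.

Lemma CS (k : nat) (u v : 'I_k -> R) :
  (\sum_i u i * v i) ^+ 2 <= (\sum_i u i ^+ 2) * (\sum_i v i ^+ 2).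
Proof.
set S := \sum_i \sum_j (u i * v j - u j * v i) ^+ 2.
have S0 : 0 <= S by apply: sumr_ge0 => i _; apply: sumr_ge0 => j _; exact: sqr_ge0.
have E1 : (\sum_i u i ^+ 2) * (\sum_j v j ^+ 2) = \sum_i \sum_j u i ^+ 2 * v j ^+ 2.
  by rewrite mulr_suml; apply: eq_bigr => i _; rewrite mulr_sumr.
have E2 : (\sum_i u i ^+ 2) * (\sum_j v j ^+ 2) = \sum_i \sum_j u j ^+ 2 * v i ^+ 2.
  by rewrite E1 exchange_big.
have E3 : (\sum_i u i * v i) ^+ 2 = \sum_i \sum_j (u i * v i) * (u j * v j).
  by rewrite expr2 mulr_suml; apply: eq_bigr => i _; rewrite mulr_sumr.
have ES : S = \sum_i \sum_j u i ^+ 2 * v j ^+ 2 + \sum_i \sum_j u j ^+ 2 * v i ^+ 2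
     - 2 * \sum_i \sum_j (u i * v i) * (u j * v j).
  rewrite mulr_sumr -big_split -sumrB /S; apply: eq_bigr => i _.
  rewrite mulr_sumr -big_split -sumrB; apply: eq_bigr => j _ /=; ring.
rewrite -E1 -E2 -E3 in ES; lra.
Qed.

Definition sq k (u : 'cV[R]_k) := \sum_(i < k) u i 0 ^+ 2.

Lemma sq_ge0 k (u : 'cV[R]_k) : 0 <= sq u.
Proof. by apply: sumr_ge0 => i _; exact: sqr_ge0. Qed.

Lemma frob_cV k (u : 'cV[R]_k) : frob u = Num.sqrt (sq u).
Proof. by rewrite /frob /sq; congr Num.sqrt; apply: eq_bigr => i _; rewrite big_ord1. Qed.

Lemma frob_sq k (u : 'cV[R]_k) : frob u ^+ 2 = sq u.
Proof. by rewrite frob_cV sqr_sqrtr // sq_ge0. Qed.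

Lemma frob_ge0 p q (A : 'M[R]_(p, q)) : 0 <= frob A.
Proof. exact: sqrtr_ge0. Qed.

Lemma frobM_sq p q (A : 'M[R]_(p, q)) :
  frob A ^+ 2 = \sum_i \sum_j A i j ^+ 2.
Proof.
rewrite /frob sqr_sqrtr //; apply: sumr_ge0 => i _; apply: sumr_ge0 => j _; exact: sqr_ge0.
Qed.

Lemma dot_le k (u v : 'cV[R]_k) :
  \sum_i u i 0 * v i 0 <= frob u * frob v.
Proof.
rewrite !frob_cV -sqrtrM ?sq_ge0 //.
apply: le_trans (ler_norm _) _.
rewrite -sqrtr_sqr; rewrite ler_sqrt ?mulr_ge0 ?sq_ge0 //.
exact: CS.
Qed.

Lemma sq_trmx d p (A : 'M[R]_(d, p)) (v : 'cV[R]_d) :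
  sq (A^T *m v) <= frob A ^+ 2 * sq v.
Proof.
rewrite frobM_sq /sq.
have -> : \sum_i \sum_j A i j ^+ 2 = \sum_j \sum_i A i j ^+ 2 by rewrite exchange_big.
rewrite mulr_suml; apply: ler_sum => j _.
rewrite !mxE.
under eq_bigr do rewrite !mxE.
exact: CS.
Qed.

Lemma sq_add k (u w : 'cV[R]_k) :
  sq (u + w) = sq u + 2 * (\sum_i u i 0 * w i 0) + sq w.
Proof.
rewrite /sq mulr_sumr -!big_split /=; apply: eq_bigr => i _; rewrite !mxE; ring.
Qed.

Lemma key_ineq p d (A : 'M[R]_(d, p)) (u : 'cV[R]_p) (v : 'cV[R]_d) :
  sq (u + A^T *m v) <= (1 + frob A ^+ 2) * (sq u + sq v).
Proof.
rewrite sq_add.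
have h1 := dot_le u (A^T *m v).
have h2 := sq_trmx A v.
rewrite -!frob_sq in h2 *.
have hy : frob (A^T *m v) <= frob A * frob v.
  rewrite -ler_sqr ?nnegrE ?frob_ge0 ?mulr_ge0 ?frob_ge0 //.
  by rewrite exprMn.
have f1 := frob_ge0 u; have f2 := frob_ge0 (A^T *m v); have f3 := frob_ge0 A;
have f4 := frob_ge0 v.
set x := frob u in h1 f1 *; set y := frob (A^T *m v) in h1 hy f2 *.
set a := frob A in hy f3 *; set z := frob v in hy f4 *.
have hay : y <= a * z := hy.
have : 0 <= (a * x - z) ^+ 2 := sqr_ge0 _.
nra.
Qed.

Lemma frob_trmx_le d p (A : 'M[R]_(d, p)) (v : 'cV[R]_d) :
  frob (A^T *m v) <= frob A * frob v.
Proof.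
have h2 := sq_trmx A v; rewrite -!frob_sq in h2.
rewrite -ler_sqr ?nnegrE ?frob_ge0 ?mulr_ge0 ?frob_ge0 //.
by rewrite exprMn.
Qed.

Lemma sq_col p d (u : 'cV[R]_p) (v : 'cV[R]_d) : sq (col_mx u v) = sq u + sq v.
Proof.
rewrite /sq big_split_ord /=; congr (_ + _); apply: eq_bigr => i _.
  by rewrite col_mxEu.
by rewrite col_mxEd.
Qed.

End Alg.

Notation Ri P f := (Rintegral P setT f).
Section Integ.
Variables (R : realType) (dT : measure_display) (T : measurableType dT)
  (P : probability T R).

Definition Int (f : T -> R) := P.-integrable setT (EFin \o f).

Lemma Int_cst k : Int (fun _ => k).
Proof. exact: finite_measure_integrable_cst. Qed.

Lemma Ri_cst k : Ri P (fun _ => k) = k.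
Proof. by rewrite Rintegral_cst //= (@probability_setT _ _ _ P) /= mulr1. Qed.

Lemma Ebar_Ri f : Int f -> Ebar P f = (Ri P f)%:E.
Proof. by move=> h; rewrite /Ebar /Rintegral fineK //; exact: integrable_fin_num. Qed.

Lemma IntD f g : Int f -> Int g -> Int (fun w => f w + g w).
Proof.
move=> hf hg; have := integrableD measurableT hf hg.
by apply: eq_integrable => // w _ /=; rewrite EFinD.
Qed.

Lemma IntZ k f : Int f -> Int (fun w => k * f w).
Proof.
move=> hf; have := integrableZl measurableT k hf.
by apply: eq_integrable => // w _ /=; rewrite EFinM.
Qed.

Lemma IntN f : Int f -> Int (fun w => - f w).
Proof.
move=> hf; have := IntZ (-1) hf.
by apply: eq_integrable => // w _ /=; rewrite mulN1r.
Qed.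

Lemma IntB f g : Int f -> Int g -> Int (fun w => f w - g w).
Proof. by move=> hf hg; apply: IntD => //; exact: IntN. Qed.

Lemma Int_sum I (s : seq I) (f : I -> T -> R) :
  (forall i, Int (f i)) -> Int (fun w => \sum_(i <- s) f i w).
Proof.
move=> h; elim: s => [|i s ih].
  by under eq_fun do rewrite big_nil; exact: Int_cst.
under eq_fun do rewrite big_cons; exact: IntD.
Qed.

Lemma Ri_sum I (s : seq I) (f : I -> T -> R) :
  (forall i, Int (f i)) -> Ri P (fun w => \sum_(i <- s) f i w) = \sum_(i <- s) Ri P (f i).
Proof.
move=> h; elim: s => [|i s ih].
  by under eq_fun do rewrite big_nil; rewrite Ri_cst big_nil.
under eq_fun do rewrite big_cons.
rewrite big_cons -ih RintegralD //; [exact: h | exact: (Int_sum s h)].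
Qed.

Lemma RiD f g : Int f -> Int g -> Ri P (fun w => f w + g w) = Ri P f + Ri P g.
Proof. by move=> hf hg; rewrite RintegralD. Qed.

Lemma RiB f g : Int f -> Int g -> Ri P (fun w => f w - g w) = Ri P f - Ri P g.
Proof. by move=> hf hg; rewrite RintegralB. Qed.

Lemma RiZ k f : Int f -> Ri P (fun w => k * f w) = k * Ri P f.
Proof. by move=> hf; rewrite RintegralZl. Qed.

Lemma Int_meas f : Int f -> measurable_fun setT f.
Proof. by move=> /integrableP[/measurable_EFinP]. Qed.

Lemma Int_le (f g : T -> R) : measurable_fun setT f -> (forall w, `|f w| <= g w) -> Int g -> Int f.
Proof.
move=> mf hfg hg; apply: le_integrable hg => //.
  exact/measurable_EFinP.
move=> w _ /=; rewrite lee_fin (le_trans (hfg w)) // ler_norm //.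
Qed.

Lemma Int_ge0 (f : T -> R) (c : R) : measurable_fun setT f -> (forall w, 0 <= f w) ->
  (Ebar P f <= c%:E)%E -> Int f.
Proof.
move=> mf f0 hc; apply/integrableP; split; first exact/measurable_EFinP.
apply: (@le_lt_trans _ _ c%:E); last exact: ltry.
apply: le_trans hc; rewrite /Ebar le_eqVlt; apply/orP; left; apply/eqP.
by apply: eq_integral => w _ /=; rewrite ger0_norm.
Qed.

Lemma Ri_le (f g : T -> R) : Int f -> Int g -> (forall w, f w <= g w) -> Ri P f <= Ri P g.
Proof. by move=> hf hg h; rewrite le_Rintegral. Qed.

End Integ.

Section Main.
Variables (R : realType) (dT : measure_display) (T : measurableType dT)
  (P : probability T R) (p d : nat) (a : T -> 'cV[R]_p) (b : T -> 'cV[R]_d)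
  (L1 sigma : R).
Hypotheses (ma : forall i, measurable_fun setT (fun w => a w i 0))
  (mb : forall i, measurable_fun setT (fun w => b w i 0))
  (L1pos : 0 < L1)
  (h3 : (Ebar P (fun w => frob (b w)) <= L1%:E)%E)
  (h4 : (Ebar P (fun w => (frob (col_mx (a w) (b w)
          - Evec P (fun w' => col_mx (a w') (b w'))) ^+ 2)%R) <= (sigma ^+ 2)%R%:E)%E).

Let Ec := Evec P (fun w' => col_mx (a w') (b w')).

Lemma mc i : measurable_fun setT (fun w => col_mx (a w) (b w) i 0).
Proof.
case: (split_ordP i) => k ->.
  by under eq_fun do rewrite col_mxEu; exact: ma.
by under eq_fun do rewrite col_mxEd; exact: mb.
Qed.

Lemma S_eq w : frob (col_mx (a w) (b w) - Ec) ^+ 2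
  = \sum_i (col_mx (a w) (b w) i 0 - Ec i 0) ^+ 2.
Proof. by rewrite frob_sq /sq; apply: eq_bigr => i _; rewrite !mxE. Qed.

Lemma IntS : Int P (fun w => frob (col_mx (a w) (b w) - Ec) ^+ 2).
Proof.
apply: (Int_ge0 _ _ h4); last by move=> w; exact: sqr_ge0.
under eq_fun do rewrite S_eq.
apply: measurable_sum => i; apply: measurable_funX; apply: measurable_funB => //.
exact: mc.
Qed.

Lemma Intc i : Int P (fun w => col_mx (a w) (b w) i 0).
Proof.
have hi : Int P (fun w => (col_mx (a w) (b w) i 0 - Ec i 0) ^+ 2).
  apply: (Int_le _ _ IntS).
    by apply: measurable_funX; apply: measurable_funB => //; exact: mc.
  move=> w; rewrite S_eq ger0_norm ?sqr_ge0 //.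
  by rewrite (bigD1 i) //= lerDl; apply: sumr_ge0 => k _; exact: sqr_ge0.
have hj : Int P (fun w => col_mx (a w) (b w) i 0 - Ec i 0).
  apply: (Int_le (g := fun w => 1 + (col_mx (a w) (b w) i 0 - Ec i 0) ^+ 2)).
  - by apply: measurable_funB => //; exact: mc.
  - move=> w; set x := _ - _.
    rewrite -real_normK ?num_real //.
    have := normr_ge0 x; nra.
  - exact: IntD (Int_cst _ _) hi.
have := IntD hj (Int_cst P (Ec i 0)).
by apply: eq_integrable => // w _ /=; rewrite subrK.
Qed.

Lemma Inta k : Int P (fun w => a w k 0).
Proof.
have := Intc (lshift d k).
by apply: eq_integrable => // w _ /=; rewrite col_mxEu.
Qed.

Lemma Intb k : Int P (fun w => b w k 0).
Proof.
have := Intc (rshift p k).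
by apply: eq_integrable => // w _ /=; rewrite col_mxEd.
Qed.

Lemma EvecL (M : 'M[R]_(p, d)) :
  Evec P (fun w => a w + M *m b w) = Evec P a + M *m Evec P b.
Proof.
apply/matrixP => i j; rewrite (ord1 j) {j} !mxE.
under [X in _ = _ + X]eq_bigr do rewrite mxE.
transitivity (Ri P (fun w => a w i 0 + \sum_k (fun k w => M i k * b w k 0) k w)).
  by apply: eq_Rintegral => w _; rewrite !mxE.
rewrite RiD; last 2 first.
- exact: Inta.
- by apply: Int_sum => k; apply: IntZ; exact: Intb.
rewrite Ri_sum; last by move=> k; apply: IntZ; exact: Intb.
congr (_ + _); apply: eq_bigr => k _ /=; rewrite RiZ //; exact: Intb.
Qed.

Lemma Evec_col : Ec = col_mx (Evec P a) (Evec P b).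
Proof.
apply/matrixP => i j; rewrite (ord1 j) {j} /Ec mxE.
case: (split_ordP i) => k ->.
  by rewrite col_mxEu mxE; apply: eq_Rintegral => w _; rewrite col_mxEu.
by rewrite col_mxEd mxE; apply: eq_Rintegral => w _; rewrite col_mxEd.
Qed.

Lemma Jensen : frob (Evec P b) <= L1.
Proof.
set e := Evec P b.
have mfb : measurable_fun setT (fun w => frob (b w)).
  under eq_fun do rewrite frob_cV.
  apply: measurableT_comp; first exact: continuous_measurable_fun (@sqrt_continuous R).
  by apply: measurable_sum => i; apply: measurable_funX; exact: mb.
have Ifb : Int P (fun w => frob (b w)) := Int_ge0 mfb (fun w => frob_ge0 _) h3.
have RiL : Ri P (fun w => frob (b w)) <= L1 by rewrite -lee_fin -Ebar_Ri.
have Ik : forall k, Int P ((fun k w => e k 0 * b w k 0) k).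
  by move=> k; apply: IntZ; exact: Intb.
have hsq : sq e = Ri P (fun w => \sum_k (fun k w => e k 0 * b w k 0) k w).
  rewrite Ri_sum //.
  rewrite /sq; apply: eq_bigr => k _ /=; rewrite RiZ ?expr2; last exact: Intb.
  by congr (_ * _); rewrite /e mxE.
have hle : Ri P (fun w => \sum_k (fun k w => e k 0 * b w k 0) k w)
    <= Ri P (fun w => frob e * frob (b w)).
  apply: Ri_le; first exact: Int_sum.
    exact: IntZ.
  by move=> w /=; exact: dot_le.
rewrite RiZ // in hle.
have h : frob e ^+ 2 <= frob e * L1.
  rewrite frob_sq hsq; apply: (le_trans hle); apply: ler_wpM2l => //; exact: frob_ge0.
have f0 := frob_ge0 e; move: h f0; rewrite expr2; move: (frob e) => f h f0.
have [->|fp] := eqVneq f 0; first exact: ltW.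
have fpos : 0 < f by rewrite lt_def fp f0.
by rewrite -(ler_pM2l fpos).
Qed.
Lemma dummy : True. Proof. by [].
Qed.

Lemma part_a (A B : 'M[R]_(d, p)) :
  frob (Evec P (fun w => a w + A^T *m b w) - Evec P (fun w => a w + B^T *m b w))
  <= L1 * frob (A - B).
Proof.
rewrite !EvecL.
have -> : Evec P a + A^T *m Evec P b - (Evec P a + B^T *m Evec P b)
    = (A - B)^T *m Evec P b.
  by rewrite opprD addrACA subrr add0r linearB /= mulmxBl.
apply: (le_trans (frob_trmx_le _ _)); rewrite mulrC.
apply: ler_wpM2r; [exact: frob_ge0 | exact: Jensen].
Qed.

Lemma part_b (A : 'M[R]_(d, p)) :
  (Ebar P (fun w => (frob (a w + A^T *m b w) ^+ 2)%R)
    <= (frob (Evec P (fun w => a w + A^T *m b w)) ^+ 2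
        + (1 + frob A ^+ 2) * sigma ^+ 2)%R%:E)%E.
Proof.
set G := fun w => a w + A^T *m b w.
set m := Evec P G.
set K := 1 + frob A ^+ 2.
set S := fun w => frob (col_mx (a w) (b w) - Ec) ^+ 2.
have hm : m = Evec P a + A^T *m Evec P b := EvecL (A^T).
have IG : forall i, Int P (fun w => G w i 0).
  move=> i.
  have : Int P (fun w => a w i 0 + \sum_k (fun k w => A^T i k * b w k 0) k w).
    apply: IntD; first exact: Inta.
    by apply: Int_sum => k; apply: IntZ; exact: Intb.
  by apply: eq_integrable => // w _ /=; rewrite /G !mxE.
have RiG : forall i, Ri P (fun w => G w i 0) = m i 0 by move=> i; rewrite /m mxE.
have IS : Int P S := IntS.
have RiS : Ri P S <= sigma ^+ 2 by rewrite -lee_fin -Ebar_Ri.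
have K0 : 0 <= K by rewrite /K addr_ge0 // sqr_ge0.
pose H := fun w => sq m + 2 * \sum_i (fun i w => m i 0 * (G w i 0 - m i 0)) i w + K * S w.
have IH : Int P H.
  apply: IntD; last exact: IntZ.
  apply: IntD; first exact: Int_cst.
  apply: IntZ; apply: Int_sum => i; apply: IntZ; apply: IntB => //; exact: Int_cst.
have RiH : Ri P H = sq m + K * Ri P S.
  rewrite /H RiD; last 2 first.
  - apply: IntD; first exact: Int_cst.
    apply: IntZ; apply: Int_sum => i; apply: IntZ; apply: IntB => //; exact: Int_cst.
  - exact: IntZ.
  rewrite RiD; last 2 first.
  - exact: Int_cst.
  - apply: IntZ; apply: Int_sum => i; apply: IntZ; apply: IntB => //; exact: Int_cst.
  rewrite Ri_cst RiZ; last first.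
    apply: Int_sum => i; apply: IntZ; apply: IntB => //; exact: Int_cst.
  rewrite Ri_sum; last first.
    move=> i; apply: IntZ; apply: IntB => //; exact: Int_cst.
  rewrite RiZ //.
  rewrite big1 ?mulr0 ?addr0; last first.
    move=> i _ /=; rewrite RiZ; last by apply: IntB => //; exact: Int_cst.
    by rewrite RiB ?RiG ?Ri_cst ?subrr ?mulr0 //; exact: Int_cst.
  done.
have pw : forall w, frob (G w) ^+ 2 <= H w.
  move=> w; rewrite frob_sq /H.
  rewrite {1}(_ : G w = m + (G w - m)); last by rewrite addrC subrK.
  rewrite sq_add.
  have E1 : \sum_i m i 0 * (G w - m) i 0
      = \sum_i (fun i w => m i 0 * (G w i 0 - m i 0)) i w.
    by apply: eq_bigr => i _; rewrite !mxE.
  rewrite E1 lerD2l.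
  have -> : G w - m = (a w - Evec P a) + A^T *m (b w - Evec P b).
    by rewrite hm /G mulmxBr opprD addrACA.
  apply: (le_trans (key_ineq _ _ _)); rewrite /S Evec_col opp_col_mx add_col_mx frob_sq sq_col.
  done.
have mf : measurable_fun setT (fun w => frob (G w) ^+ 2).
  under eq_fun do rewrite frob_sq.
  by apply: measurable_sum => i; apply: measurable_funX; apply: Int_meas; exact: IG.
have IF : Int P (fun w => frob (G w) ^+ 2).
  apply: (Int_le mf _ IH) => w.
  by rewrite ger0_norm ?sqr_ge0 //.
rewrite (Ebar_Ri IF) lee_fin.
apply: (le_trans (Ri_le IF IH pw)).
rewrite RiH frob_sq lerD2l.
by apply: ler_wpM2l.
Qed.

End Main.

Theorem lemma2p2
  (R : realType) (dT : measure_display) (T : measurableType dT)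
  (P : probability T R) (n m d : nat)
  (l : 'cV[R]_n -> 'cV[R]_m -> 'cV[R]_d -> R)
  (gx : 'cV[R]_n -> 'cV[R]_m -> 'cV[R]_d -> 'cV[R]_n)
  (gy : 'cV[R]_n -> 'cV[R]_m -> 'cV[R]_d -> 'cV[R]_m)
  (gz : 'cV[R]_n -> 'cV[R]_m -> 'cV[R]_d -> 'cV[R]_d)
  (psi : 'cV[R]_n -> 'cV[R]_m -> 'cV[R]_d)
  (Jx : 'cV[R]_n -> 'cV[R]_m -> 'M[R]_(d, n))
  (Jy : 'cV[R]_n -> 'cV[R]_m -> 'M[R]_(d, m))
  (xi : T -> 'cV[R]_d)
  (L0 l0 L1 sigma : R) :
  (0 < n)%N -> (0 < m)%N -> (0 < d)%N ->
  0 < L0 -> 0 < l0 -> 0 < L1 -> 0 < sigma ->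
  C1_with_grads l gx gy gz ->
  diff_with_jac psi Jx Jy ->
  (* the noise xi ~ P and the integrands are random variables *)
  (forall x y (i : 'I_n), measurable_fun setT (fun w => gx x y (zof psi xi x y w) i 0)) ->
  (forall x y (i : 'I_m), measurable_fun setT (fun w => gy x y (zof psi xi x y w) i 0)) ->
  (forall x y (i : 'I_d), measurable_fun setT (fun w => gz x y (zof psi xi x y w) i 0)) ->
  (* (A3) *)
  (forall x y, (Ebar P (fun w => frob (gx x y (zof psi xi x y w))) <= L1%:E)%E) ->
  (forall x y, (Ebar P (fun w => frob (gz x y (zof psi xi x y w))) <= L1%:E)%E) ->
  (* (A4) *)
  (forall x y, (Ebar P (fun w => (
      frob (col_mx (gx x y (zof psi xi x y w)) (gz x y (zof psi xi x y w))
            - Evec P (fun w' => col_mx (gx x y (zof psi xi x y w')) (gz x y (zof psi xi x y w'))))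
      ^+ 2)%R) <= (sigma ^+ 2)%R%:E)%E) ->
  (forall x y, (Ebar P (fun w => (
      frob (col_mx (gy x y (zof psi xi x y w)) (gz x y (zof psi xi x y w))
            - Evec P (fun w' => col_mx (gy x y (zof psi xi x y w')) (gz x y (zof psi xi x y w'))))
      ^+ 2)%R) <= (sigma ^+ 2)%R%:E)%E) ->
  (* (A5) *)
  (forall x y x' y', frob (psi x y - psi x' y') <= L0 * frob (col_mx (x - x') (y - y'))) ->
  (forall x y x' y', frob (row_mx (Jx x y) (Jy x y) - row_mx (Jx x' y') (Jy x' y'))
                     <= l0 * frob (col_mx (x - x') (y - y'))) ->
  (* any current estimate psi^t (a differentiable map) and any current iterate *)
  forall (psit : 'cV[R]_n -> 'cV[R]_m -> 'cV[R]_d)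
         (Jtx : 'cV[R]_n -> 'cV[R]_m -> 'M[R]_(d, n))
         (Jty : 'cV[R]_n -> 'cV[R]_m -> 'M[R]_(d, m)),
  diff_with_jac psit Jtx Jty ->
  forall (x : 'cV[R]_n) (y : 'cV[R]_m),
  let gradLx := Evec P (fun w => Gx gx gz Jx x y (zof psi xi x y w)) in
  let gradLy := Evec P (fun w => Gy gy gz Jy x y (zof psi xi x y w)) in
  let EGx := Evec P (fun w => Gx gx gz Jtx x y (zof psi xi x y w)) in
  let EGy := Evec P (fun w => Gy gy gz Jty x y (zof psi xi x y w)) in
  [/\ frob (EGx - gradLx) <= L1 * frob (Jtx x y - Jx x y),
      (Ebar P (fun w => (frob (Gx gx gz Jtx x y (zof psi xi x y w)) ^+ 2)%R)
        <= (frob EGx ^+ 2 + (1 + frob (Jtx x y) ^+ 2) * sigma ^+ 2)%R%:E)%E,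
      frob (EGy - gradLy) <= L1 * frob (Jty x y - Jy x y) &
      (Ebar P (fun w => (frob (Gy gy gz Jty x y (zof psi xi x y w)) ^+ 2)%R)
        <= (frob EGy ^+ 2 + (1 + frob (Jty x y) ^+ 2) * sigma ^+ 2)%R%:E)%E].
Proof.
move=> _ _ _ _ _ L1p _ _ _ mx my mz _ A3z A4x A4y _ _ psit Jtx Jty _ x y.
move=> gradLx gradLy EGx EGy.
split.
- exact: (part_a (mx x y) (mz x y) L1p (A3z x y) (A4x x y) (Jtx x y) (Jx x y)).
- exact: (part_b (mx x y) (mz x y) (A4x x y) (Jtx x y)).
- exact: (part_a (my x y) (mz x y) L1p (A3z x y) (A4y x y) (Jty x y) (Jy x y)).
- exact: (part_b (my x y) (mz x y) (A4y x y) (Jty x y)).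
Qed.
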